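(* Let $n\ge 3$ be an integer and let $\varphi$ be the automorphism of $F$ with $\varphi(x)=x$, $\varphi(y)=yx$. Then $(\varphi(r_1),\varphi(r_2))\sim_{AC}(r_1,r_2)$, where $(r_1,r_2)=\mathrm{AK}(n)=(xyxy^{-1}x^{-1}y^{-1},\ x^ny^{-(n+1)})$.
   Context: $F=F(x,y)$ is the free group on $\{x,y\}$. The Akbulut–Kurby pair is $\mathrm{AK}(n)=(xyxy^{-1}x^{-1}y^{-1},\ x^{n}y^{-(n+1)})$, i.e. the presentation $\langle x,y\mid xyx=yxy,\ x^n=y^{n+1}\rangle$ of the trivial group. The Andrews–Curtis (AC) moves on a pair $(r_1,r_2)\in F^2$ are: replace $r_i$ by $r_ir_j$ ($i\ne j$); replace $r_i$ by $r_i^{-1}$; replace $r_i$ by $w^{-1}r_iw$ for some $w\in F$. Two pairs are AC-equivalent, $\sim_{AC}$, if one can be obtained from the other by a finite sequence of AC-moves. *)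

(* Defs.v *)
From mathcomp Require Import all_boot.
From Stdlib Require Import Relations.
Set Implicit Arguments. Unset Strict Implicit. Unset Printing Implicit Defensive.

(* A letter is (g, e): g = false means x, g = true means y;
   e = false means exponent +1, e = true means exponent -1. *)
Definition letter := (bool * bool)%type.
Definition word := seq letter.

Definition lx : letter := (false, false).
Definition lX : letter := (false, true).
Definition ly : letter := (true, false).
Definition lY : letter := (true, true).

Definition inv_letter (a : letter) : letter := (a.1, ~~ a.2).

Fixpoint reduce (w : word) : word :=
  match w with
  | [::] => [::]
  | a :: w' =>
      match reduce w' with
      | b :: r => if b == inv_letter a then r else a :: b :: r
      | [::] => [:: a]
      end
  end.

Definition reduced (w : word) : bool := reduce w == w.

Definition wmul (u v : word) : word := reduce (u ++ v).
Definition winv (w : word) : word := rev (map inv_letter w).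
Definition wconj (r w : word) : word := wmul (winv w) (wmul r w).

Inductive ac_move : word * word -> word * word -> Prop :=
  | ac_mul12 r1 r2 : ac_move (r1, r2) (wmul r1 r2, r2)
  | ac_mul21 r1 r2 : ac_move (r1, r2) (r1, wmul r2 r1)
  | ac_inv1 r1 r2 : ac_move (r1, r2) (winv r1, r2)
  | ac_inv2 r1 r2 : ac_move (r1, r2) (r1, winv r2)
  | ac_conj1 r1 r2 w : ac_move (r1, r2) (wconj r1 w, r2)
  | ac_conj2 r1 r2 w : ac_move (r1, r2) (r1, wconj r2 w).

Definition ac_equiv : word * word -> word * word -> Prop :=
  clos_refl_trans _ ac_move.

Definition AK1 : word := reduce [:: lx; ly; lx; lY; lX; lY].
Definition AK2 (n : nat) : word := reduce (nseq n lx ++ nseq n.+1 lY).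

Definition phi_letter (a : letter) : word :=
  match a with
  | (false, false) => [:: lx]
  | (false, true) => [:: lX]
  | (true, false) => [:: ly; lx]
  | (true, true) => [:: lX; lY]
  end.
Definition phi (w : word) : word := reduce (flatten (map phi_letter w)).

(* Main.v *)
Require Import Defs.
From mathcomp Require Import all_boot.
From Stdlib Require Import Relations Setoid Morphisms.
Set Implicit Arguments. Unset Strict Implicit. Unset Printing Implicit Defensive.

Lemma inv_letterK : involutive inv_letter.
Proof. by case=> a b; rewrite /inv_letter /= negbK. Qed.

Definition step (a : letter) (r : word) : word :=
  match r with
  | b :: r' => if b == inv_letter a then r' else a :: b :: r'
  | [::] => [:: a]
  end.

Lemma reduce_cons a w : reduce (a :: w) = step a (reduce w).
Proof. by []. Qed.

Fixpoint nf (w : word) : bool :=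
  if w is a :: t then (if t is b :: _ then b != inv_letter a else true) && nf t else true.

Lemma nf_step a r : nf r -> nf (step a r).
Proof.
case: r => [|b r] //= Hbr.
case: ifP => hb.
- by case/andP: Hbr.
- by rewrite /= hb Hbr.
Qed.

Lemma nf_reduce w : nf (reduce w).
Proof. by elim: w => [|a w IH] //=; rewrite -/(step a (reduce w)); apply: nf_step. Qed.

Lemma nf_reduceK w : nf w -> reduce w = w.
Proof.
elim: w => [|a w IH] //= /andP[ha hw].
rewrite -/(step a (reduce w)) IH //.
case: w ha {IH hw} => [|b w] //= hb.
by rewrite (negbTE hb).
Qed.

Lemma stepK a r : nf r -> step a (step (inv_letter a) r) = r.
Proof.
case: r => [|b r] /=; first by rewrite eqxx.
move=> Hbr.
case: eqP => [hb|hb].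
- subst b. case: r Hbr => [|c r] /=; rewrite !inv_letterK //.
  by case/andP => /negbTE ->.
- by rewrite /= eqxx.
Qed.



Lemma nf_foldr r u : nf r -> nf (foldr step r u).
Proof. by move=> hr; elim: u => [|a u IH] //=; apply: nf_step. Qed.

Lemma reduce_foldr w : reduce w = foldr step [::] w.
Proof. by elim: w => [|a w IH] //=; rewrite -IH. Qed.

Lemma reduce_cat u v : reduce (u ++ v) = foldr step (reduce v) u.
Proof. by rewrite !reduce_foldr foldr_cat. Qed.

Lemma foldr_step_step r a s : nf r -> nf s ->
  foldr step r (step a s) = step a (foldr step r s).
Proof.
move=> hr; case: s => [|b s] //= hs.
case: eqP => [hb|hb] //=.
rewrite hb stepK //.
by apply: nf_foldr; case/andP: hs.
Qed.

Lemma foldr_step_reduce r u : nf r -> foldr step r u = foldr step r (reduce u).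
Proof.
move=> hr; elim: u => [|a u IH] //=.
by rewrite IH -/(step a (reduce u)) foldr_step_step // nf_reduce.
Qed.

Lemma reduce_cat2 u v : reduce (u ++ v) = reduce (reduce u ++ reduce v).
Proof.
by rewrite reduce_cat (foldr_step_reduce _ (nf_reduce v)) reduce_cat (nf_reduceK (nf_reduce v)).
Qed.

Lemma reduce_idem w : reduce (reduce w) = reduce w.
Proof. exact: nf_reduceK (nf_reduce w). Qed.

Inductive geq (rs : word) : word -> word -> Prop :=
| gq_refl u : geq rs u u
| gq_sym u v : geq rs u v -> geq rs v u
| gq_trans u v w : geq rs u v -> geq rs v w -> geq rs u w
| gq_cancel u v c : geq rs (u ++ c :: inv_letter c :: v) (u ++ v)
| gq_rel u v : geq rs (u ++ rs ++ v) (u ++ v).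

#[export] Instance geq_equiv rs : Equivalence (geq rs).
Proof. split; [exact: gq_refl| exact: gq_sym| exact: gq_trans]. Qed.

#[export] Hint Resolve gq_refl : core.

Lemma geq_ctx rs p q u v : geq rs u v -> geq rs (p ++ u ++ q) (p ++ v ++ q).
Proof.
elim=> {u v} [u|u v _ IH|u v w _ IH1 _ IH2|u v c|u v].
- reflexivity.
- by symmetry.
- by transitivity (p ++ v ++ q).
- by rewrite -!catA catA [in X in geq _ _ X]catA; apply: gq_cancel.
- by rewrite -!catA catA [in X in geq _ _ X]catA; apply: gq_rel.
Qed.

#[export] Instance cat_proper rs : Proper (geq rs ==> geq rs ==> geq rs) cat.
Proof.
move=> u u' hu v v' hv.
transitivity (u' ++ v).
- by have := geq_ctx [::] v hu; rewrite /=.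
- by have := geq_ctx u' [::] hv; rewrite !cats0.
Qed.

#[export] Instance cons_proper rs : Proper (eq ==> geq rs ==> geq rs) (@cons letter).
Proof. by move=> a _ <- u v h; have := geq_ctx [:: a] [::] h; rewrite !cats0. Qed.

Lemma geq_reduce rs w : geq rs w (reduce w).
Proof.
elim: w => [|a w IH]; first reflexivity.
rewrite reduce_cons.
transitivity (a :: reduce w); first by have := geq_ctx [:: a] [::] IH; rewrite /= !cats0.
case: (reduce w) => [|b r]; first reflexivity.
rewrite /=.
case: (b =P inv_letter a) => [->|_]; last reflexivity.
by have := gq_cancel rs [::] r a.
Qed.

Lemma geq_free_reduce u v : geq [::] u v -> reduce u = reduce v.
Proof.
elim=> {u v} [u|u v _ IH|u v w _ IH1 _ IH2|u v c|u v].
- by [].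
- by [].
- by rewrite IH1.
- rewrite !reduce_cat; congr foldr.
  by rewrite !reduce_cons stepK // nf_reduce.
- by [].
Qed.

Lemma free_geq u v : reduce u = reduce v -> geq [::] u v.
Proof. move=> h; transitivity (reduce u); first exact: geq_reduce. by rewrite h; symmetry; exact: geq_reduce. Qed.

Lemma geq_mono rs u v : geq [::] u v -> geq rs u v.
Proof.
elim=> {u v} [u|u v _ IH|u v w _ IH1 _ IH2|u v c|u v].
- reflexivity.
- by symmetry.
- by transitivity v.
- exact: gq_cancel.
- rewrite /=; reflexivity.
Qed.

Lemma geq_relator rs rs' u v : geq [::] rs rs' -> geq rs u v -> geq rs' u v.
Proof.
move=> hr; elim=> {u v} [u|u v _ IH|u v w _ IH1 _ IH2|u v c|u v].
- reflexivity.
- by symmetry.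
- by transitivity v.
- exact: gq_cancel.
- transitivity (u ++ rs' ++ v); last exact: gq_rel.
  by apply: geq_mono; apply: geq_ctx.
Qed.

Lemma winv_cat u v : winv (u ++ v) = winv v ++ winv u.
Proof. by rewrite /winv map_cat rev_cat. Qed.

Lemma winvK : involutive winv.
Proof. by move=> w; rewrite /winv map_rev revK -map_comp map_id_in // => a _ /=; rewrite inv_letterK. Qed.

Lemma winv_cons a w : winv (a :: w) = winv w ++ [:: inv_letter a].
Proof. by rewrite -cat1s winv_cat. Qed.

Lemma geq_cancelR rs w : geq rs (w ++ winv w) [::].
Proof.
elim: w => [|a w IH]; first reflexivity.
rewrite winv_cons /= catA.
transitivity (a :: [::] ++ [:: inv_letter a]).
- by have := geq_ctx [:: a] [:: inv_letter a] IH.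
- by have := gq_cancel rs [::] [::] a.
Qed.

Lemma geq_cancelL rs w : geq rs (winv w ++ w) [::].
Proof. by have := geq_cancelR rs (winv w); rewrite winvK. Qed.

Lemma geq_relw rs : geq rs rs [::].
Proof. by have := gq_rel rs [::] [::]; rewrite /= cats0. Qed.

Lemma geq_winv rs u v : geq rs u v -> geq rs (winv u) (winv v).
Proof.
elim=> {u v} [u|u v _ IH|u v w _ IH1 _ IH2|u v c|u v].
- reflexivity.
- by symmetry.
- by transitivity (winv v).
- rewrite !winv_cat !winv_cons /= -!catA /= inv_letterK.
  exact: gq_cancel.
- rewrite !winv_cat.
  have h : geq rs (winv rs) [::].
    have := geq_ctx (winv rs) [::] (geq_relw rs); rewrite /= !cats0 => h1.
    transitivity (winv rs ++ rs); [by symmetry | exact: geq_cancelL].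
  by rewrite -catA; exact: (geq_ctx (winv v) (winv u) h).
Qed.

Lemma inv_eq a b : (inv_letter a == b) = (a == inv_letter b).
Proof. by rewrite -(inj_eq (can_inj inv_letterK)) inv_letterK. Qed.

Lemma nf_rcons s c : nf (rcons s c) =
  nf s && (if s is [::] then true else c != inv_letter (last c s)).
Proof.
elim: s => [|a t IH] //=.
rewrite IH; case: t {IH} => [|b t] //=.
by rewrite andbT.
by rewrite !andbA.
Qed.

Lemma nf_winv w : nf w -> nf (winv w).
Proof.
elim: w => [|a w IH] // /andP[ha hw].
rewrite winv_cons cats1 nf_rcons IH //=.
case: w ha hw {IH} => [|b w] // hb _.
rewrite winv_cons cats1; case: (rcons _ _) (last_rcons (inv_letter a) (winv w) (inv_letter b)) => [|d r] //= ->.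
by rewrite inv_letterK eq_sym.
Qed.

Lemma rr u : geq [::] (reduce u) u.
Proof. by symmetry; apply: geq_reduce. Qed.

Lemma req u v : geq [::] u v -> reduce u = reduce v.
Proof. exact: geq_free_reduce. Qed.

Lemma ac_trans x y z : ac_equiv x y -> ac_equiv y z -> ac_equiv x z.
Proof. exact: rt_trans. Qed.

Lemma ac_step x y : ac_move x y -> ac_equiv x y.
Proof. exact: rt_step. Qed.

Lemma ac_eq x y : x = y -> ac_equiv x y.
Proof. by move=> ->; apply: rt_refl. Qed.

Lemma cR w : geq [::] (w ++ winv w) [::].
Proof. exact: geq_cancelR. Qed.
Lemma cL w : geq [::] (winv w ++ w) [::].
Proof. exact: geq_cancelL. Qed.

Lemma ac_rel_fwd a b w : nf a ->
  ac_equiv (a, reduce b) (a, reduce (b ++ winv w ++ a ++ w)).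
Proof.
move=> ha.
apply: ac_trans (ac_step (ac_conj1 a (reduce b) w)) _.
apply: ac_trans (ac_step (ac_mul21 _ _)) _.
apply: ac_trans (ac_step (ac_conj1 _ _ (winv w))) _.
apply: ac_eq; congr pair.
- rewrite /wconj /wmul -[RHS](nf_reduceK ha); apply: req.
  by rewrite !rr winvK -!catA catA (cR w) /= cats0.
- by rewrite /wconj /wmul; apply: req; rewrite !rr.
Qed.

Lemma ac_rel_bwd a b w : nf a ->
  ac_equiv (a, reduce (b ++ winv w ++ a ++ w)) (a, reduce b).
Proof.
move=> ha.
apply: ac_trans (ac_step (ac_inv1 _ _)) _.
apply: ac_trans (ac_rel_fwd _ w (nf_winv ha)) _.
apply: ac_trans (ac_step (ac_inv1 _ _)) _.
apply: ac_eq; rewrite winvK; congr pair.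
apply: req.
rewrite -!catA (catA w (winv w)) (cR w) /= (catA a (winv a)) (cR a) /=.
by rewrite (cL w) cats0.
Qed.

Lemma ac_conj_fwd a b w : ac_equiv (a, reduce b) (a, reduce (winv w ++ b ++ w)).
Proof.
apply: ac_trans (ac_step (ac_conj2 a (reduce b) w)) _.
by apply: ac_eq; congr pair; rewrite /wconj /wmul; apply: req; rewrite !rr.
Qed.

Lemma ac_conj_bwd a b w : ac_equiv (a, reduce (winv w ++ b ++ w)) (a, reduce b).
Proof.
apply: ac_trans (ac_conj_fwd _ _ (winv w)) _.
apply: ac_eq; congr pair; apply: req; rewrite winvK.
by rewrite !catA cR /= -!catA cR cats0.
Qed.

Definition acr a b c :=
  ac_equiv (a, reduce b) (a, reduce c) /\ ac_equiv (a, reduce c) (a, reduce b).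

Lemma acr_sym a b c : acr a b c -> acr a c b.
Proof. by case. Qed.

Lemma acr_trans a b c d : acr a b c -> acr a c d -> acr a b d.
Proof. by case=> h1 h2 [h3 h4]; split; apply: ac_trans; eauto. Qed.

Lemma acr_free a b c : geq [::] b c -> acr a b c.
Proof. by move=> /req h; split; apply: ac_eq; rewrite h. Qed.

Lemma acr_rel a b w : nf a -> acr a b (b ++ winv w ++ a ++ w).
Proof. by move=> ha; split; [apply: ac_rel_fwd | apply: ac_rel_bwd]. Qed.

Lemma acr_relV a b w : nf a -> acr a b (b ++ winv w ++ winv a ++ w).
Proof.
move=> ha; apply: acr_sym.
apply: acr_trans (acr_rel _ w ha) _.
apply: acr_free.
by rewrite -!catA (catA w (winv w)) (cR w) /= (catA (winv a) a) (cL a) /= (cL w) cats0.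
Qed.

Lemma acr_conj a b w : acr a b (winv w ++ b ++ w).
Proof. by split; [apply: ac_conj_fwd | apply: ac_conj_bwd]. Qed.

Lemma acr_geq_aux a u v : nf a -> geq a u v -> forall b, acr a b (b ++ winv u ++ v).
Proof.
move=> ha; elim=> {u v} [u|u v _ IH|u v w _ IH1 _ IH2|u v c|u v] b.
- by apply: acr_free; rewrite cL cats0.
- apply: acr_sym; apply: acr_trans (IH (b ++ winv v ++ u)) _.
  by apply: acr_free; rewrite -!catA (catA u (winv u)) (cR u) /= (cL v) cats0.
- apply: acr_trans (IH1 b) _.
  apply: acr_trans (IH2 (b ++ winv u ++ v)) _.
  by apply: acr_free; rewrite -!catA (catA v (winv v)) (cR v).
- apply: acr_free; rewrite !winv_cat !winv_cons /= -!catA /= inv_letterK.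
  symmetry; rewrite (catA (winv u) u v) (cL u) /= catA.
  have -> := gq_cancel [::] (b ++ winv v) v c.
  by rewrite -catA (cL v) cats0.
- apply: acr_trans (acr_relV b v ha) _.
  apply: acr_free; rewrite !winv_cat -!catA.
  by rewrite (catA (winv u) u v) (cL u).
Qed.

Lemma acr_geq a b c w : nf a -> geq a c (w ++ b ++ winv w) -> acr a b c.
Proof.
move=> ha h.
have := acr_geq_aux ha h c.
move=> h1; apply: acr_sym; apply: acr_trans h1 _.
apply: acr_trans (acr_free _ (_ : geq [::] _ (w ++ b ++ winv w))) _.
  by rewrite catA cR.
by apply: acr_sym; have := acr_conj a b (winv w); rewrite winvK.
Qed.

Definition pswap (p : word * word) := (p.2, p.1).

Lemma ac_swap x y : ac_equiv x y -> ac_equiv (pswap x) (pswap y).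
Proof.
elim=> {x y} [x y h|x|x y z _ IH1 _ IH2].
- apply: ac_step; case: h => *; constructor.
- exact: rt_refl.
- exact: ac_trans IH1 IH2.
Qed.

Lemma nseqSr (a : letter) k : nseq k.+1 a = nseq k a ++ [:: a].
Proof. by rewrite -addn1 nseqD. Qed.

Lemma nseq_swap (a : letter) k : a :: nseq k a = nseq k a ++ [:: a].
Proof. by rewrite -nseqSr. Qed.

Lemma nseq_swapc (a : letter) k s : a :: nseq k a ++ s = nseq k a ++ a :: s.
Proof. by elim: k => //= k ->. Qed.

Lemma winv_nseq a k : winv (nseq k a) = nseq k (inv_letter a).
Proof. by rewrite /winv map_nseq rev_nseq. Qed.

Lemma rule rs p q t : rs = p ++ winv q -> geq rs (p ++ t) (q ++ t).
Proof.
move=> E.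
transitivity (p ++ winv q ++ q ++ t).
  by rewrite (catA (winv q)) (geq_cancelL rs q).
by rewrite catA -E; have := gq_rel rs [::] (q ++ t).
Qed.

Definition r1w : word := [:: lx; ly; lx; lY; lX; lY].

Lemma B1 t : geq r1w (lx :: ly :: lx :: t) (ly :: lx :: ly :: t).
Proof. exact: (rule t (_ : r1w = [:: lx; ly; lx] ++ winv [:: ly; lx; ly])). Qed.

Lemma cxX rs t : geq rs (lx :: lX :: t) t.
Proof. exact: (gq_cancel rs [::] t lx). Qed.
Lemma cXx rs t : geq rs (lX :: lx :: t) t.
Proof. exact: (gq_cancel rs [::] t lX). Qed.
Lemma cyY rs t : geq rs (ly :: lY :: t) t.
Proof. exact: (gq_cancel rs [::] t ly). Qed.
Lemma cYy rs t : geq rs (lY :: ly :: t) t.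
Proof. exact: (gq_cancel rs [::] t lY). Qed.

Lemma D1 k t : geq r1w (lx :: ly :: lx :: nseq k lx ++ t) (nseq k ly ++ lx :: ly :: lx :: t).
Proof.
elim: k => [|k IH] /=; first by [].
by rewrite B1 IH.
Qed.

Lemma D2 k t : geq r1w (lx :: ly :: lx :: nseq k ly ++ t) (nseq k lx ++ lx :: ly :: lx :: t).
Proof.
elim: k => [|k IH] /=; first by [].
by rewrite -B1 IH.
Qed.

Lemma E2 k t : geq r1w (nseq k lY ++ lX :: lY :: lX :: t) (lX :: lY :: lX :: nseq k lX ++ t).
Proof.
have := geq_winv (D2 k [::]); rewrite cats0 !winv_cat !winv_cons !winv_nseq /= => h.
have := geq_ctx [::] t h; rewrite /= -!catA /=.
done.
Qed.

Lemma D3 k t : geq r1w (lx :: ly :: lx :: nseq k lY ++ lX :: lY :: lX :: t) (nseq k lX ++ t).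
Proof. by rewrite E2 cxX cyY cxX. Qed.

Lemma C1 t : geq r1w (ly :: lx :: lY :: t) (lX :: ly :: lx :: t).
Proof.
symmetry.
transitivity (lX :: ly :: lx :: ly :: lY :: t); first by rewrite cyY.
by rewrite -B1 cXx.
Qed.

Lemma L2 k t : geq r1w (ly :: nseq k lx ++ lY :: t) (lX :: nseq k ly ++ lx :: t).
Proof.
elim: k t => [|k IH] t /=; first by rewrite cyY cXx.
rewrite nseq_swapc.
transitivity (ly :: nseq k lx ++ lY :: ly :: lx :: lY :: t); first by rewrite cYy.
by rewrite IH C1 cxX nseq_swapc.
Qed.

Lemma invE : (inv_letter lx = lX) * (inv_letter lX = lx) * (inv_letter ly = lY) * (inv_letter lY = ly).
Proof. by []. Qed.

Lemma XxC rs k t : geq rs (nseq k lX ++ nseq k lx ++ t) t.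
Proof.
have := geq_ctx [::] t (geq_cancelL rs (nseq k lx)).
by rewrite winv_nseq -catA.
Qed.

Definition r2w n : word := nseq n lx ++ nseq n.+1 lY.
Definition sw n : word := nseq n.+1 lX ++ ly :: nseq n lx ++ [:: lY].
Definition gw n : word := nseq n.+2 lX ++ [:: lx; ly; lx].

Lemma partI n : geq r1w (sw n) (gw n ++ r2w n ++ winv (gw n)).
Proof.
rewrite /sw /gw /r2w winv_cat winv_nseq -!catA /= !invE.
rewrite D1 (@D3 n.+1) (@nseq_swap lx n) (@XxC r1w n.+1 [:: lx]).
by rewrite L2 -nseq_swapc.
Qed.

Lemma xXC rs k t : geq rs (nseq k lx ++ nseq k lX ++ t) t.
Proof.
have := geq_ctx [::] t (geq_cancelR rs (nseq k lx)).
by rewrite winv_nseq -catA.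
Qed.

Lemma S1 n t : geq (sw n) (ly :: nseq n lx ++ t) (nseq n.+1 lx ++ ly :: t).
Proof.
transitivity (nseq n.+1 lx ++ nseq n.+1 lX ++ ly :: nseq n lx ++ t); first by rewrite xXC.
apply: cat_proper => //.
transitivity (sw n ++ ly :: t); last by have := gq_rel (sw n) [::] (ly :: t).
rewrite (_ : sw n ++ ly :: t = nseq n.+1 lX ++ ly :: nseq n lx ++ lY :: ly :: t); last by rewrite /sw -!catA /= -!catA.
by rewrite cYy.
Qed.

Lemma S3 n t : geq (sw n) (lY :: nseq n.+1 lx ++ t) (nseq n lx ++ lY :: t).
Proof.
symmetry.
transitivity (lY :: ly :: nseq n lx ++ lY :: t); first by rewrite cYy.
by rewrite S1 /= cyY.
Qed.

Definition phi1w : word := [:: lx; ly; lx; lY; lX; lX; lY].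

Lemma Ins rs m s : geq rs (nseq m lx ++ s) (lx :: lx :: nseq m lx ++ lX :: lX :: s).
Proof. by rewrite (@nseq_swapc lx m) cxX (@nseq_swapc lx m) cxX. Qed.

Lemma partII m : geq (sw m.+1) phi1w (nseq m.+2 lX ++ r1w ++ winv (nseq m.+2 lX)).
Proof.
symmetry.
rewrite winv_nseq invE /r1w /=.
rewrite nseq_swapc cXx.
have h3 := @S3 m.+1 [::]; rewrite cats0 /= in h3.
rewrite h3 cXx.
rewrite (@Ins (sw m.+1) m [:: lY]).
have h3' := @S3 m.+1 [:: lX; lX; lY]; rewrite /= in h3'.
rewrite h3'.
rewrite (@nseq_swapc lx m).
have h1 := @S1 m.+1; rewrite /= in h1.
rewrite h1.
by rewrite (@nseq_swapc lx m) (@nseq_swapc lx m) XxC cXx.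
Qed.

Definition phiw (w : word) : word := flatten (map phi_letter w).

Lemma phiw_cat u v : phiw (u ++ v) = phiw u ++ phiw v.
Proof. by rewrite /phiw map_cat flatten_cat. Qed.

Lemma phiw_cons a w : phiw (a :: w) = phi_letter a ++ phiw w.
Proof. by []. Qed.

Lemma phi_letter_inv a : phi_letter (inv_letter a) = winv (phi_letter a).
Proof. by case: a => [[] []]. Qed.

Lemma geq_phi rs u v : geq rs u v -> geq (phiw rs) (phiw u) (phiw v).
Proof.
elim=> {u v} [u|u v _ IH|u v w _ IH1 _ IH2|u v c|u v].
- reflexivity.
- by symmetry.
- by transitivity (phiw v).
- rewrite !phiw_cat !phiw_cons phi_letter_inv catA.
  have := geq_ctx (phiw u) (phiw v) (geq_cancelR (phiw rs) (phi_letter c)).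
  by rewrite /= !catA.
- rewrite !phiw_cat; exact: gq_rel.
Qed.

Lemma phiw_nseqx k : phiw (nseq k lx) = nseq k lx.
Proof. by elim: k => // k IH; rewrite -[nseq k.+1 lx]/(lx :: nseq k lx) phiw_cons IH. Qed.
Lemma phiw_nseqX k : phiw (nseq k lX) = nseq k lX.
Proof. by elim: k => // k IH; rewrite -[nseq k.+1 lX]/(lX :: nseq k lX) phiw_cons IH. Qed.

Lemma phiw_winv w : phiw (winv w) = winv (phiw w).
Proof.
elim: w => // a w IH.
rewrite winv_cons phiw_cat IH phiw_cons winv_cat; congr (_ ++ _).
by case: a => [[] []].
Qed.

Lemma phiw_sw n : geq [::] (phiw (sw n)) (sw n).
Proof.
rewrite /sw phiw_cat phiw_cons phiw_cat phiw_nseqx phiw_nseqX /=.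
by rewrite (@nseq_swapc lx n) cxX.
Qed.

Lemma AK1E : AK1 = r1w.
Proof. by []. Qed.

Lemma phiAK1E : phi AK1 = phi1w.
Proof. by []. Qed.

Lemma partIII n : geq phi1w (sw n) (phiw (gw n) ++ phiw (r2w n) ++ winv (phiw (gw n))).
Proof.
have h : geq (phiw r1w) (phiw (sw n)) (phiw (gw n) ++ phiw (r2w n) ++ winv (phiw (gw n))).
  by rewrite -phiw_winv -!phiw_cat; exact: geq_phi (partI n).
have hr : geq [::] (phiw r1w) phi1w.
  by rewrite -phiAK1E /phi AK1E; exact: geq_reduce.
have h' := geq_relator hr h.
transitivity (phiw (sw n)); last exact: h'.
by apply: geq_mono; symmetry; apply: phiw_sw.
Qed.

Theorem lemma6 (n : nat) (hn : 3 <= n) :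
  ac_equiv (phi AK1, phi (AK2 n)) (AK1, AK2 n).
Proof.
case: n hn => [|m] // hm.
have e2 : AK2 m.+1 = reduce (r2w m.+1) by [].
have e3 : phi (AK2 m.+1) = reduce (phiw (r2w m.+1)).
  rewrite e2 /phi; apply: req.
  by have := geq_phi (rr (r2w m.+1)).
have nf1 : nf r1w by [].
have nfp : nf phi1w by [].
have H3 := acr_geq nfp (partIII m.+1).
have H2 := acr_geq (nf_reduce (sw m.+1))
  (geq_relator (geq_reduce [::] (sw m.+1)) (partII m)).
have H1 := acr_geq nf1 (partI m.+1).
rewrite phiAK1E e3 AK1E e2.
apply: ac_trans (proj1 H3) _.
apply: ac_trans (_ : ac_equiv _ (r1w, reduce (sw m.+1))) (proj2 H1).
have := ac_swap (proj2 H2).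
by rewrite /pswap /=.
Qed.
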